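(* Let $G$ be a group (as an algebra with multiplication, inverse and identity) and $K,H\trianglelefteq G$ normal subgroups with $K\le H$. Then: (1) there is a homomorphism $\phi:G/H\to\operatorname{Aut}(K/[K,H])$ such that $G(\alpha_K)/\Delta_{\alpha_K\alpha_H}\cong K/[K,H]\rtimes_\phi G/H$; (2) $G(\alpha_K)/\Delta_{\alpha_K 1}\cong K/[K,G]$. Here $[K,H]$ is the usual group commutator subgroup.
   Context: For a normal subgroup $N\trianglelefteq G$, $\alpha_N=\{(x,y)\in G^2:xy^{-1}\in N\}$ is the corresponding congruence; $1$ denotes the total congruence of $G$. For a congruence $\alpha$ of an algebra $A$, $A(\alpha)=\{(x,y)\in A\times A:(x,y)\in\alpha\}$ is $\alpha$ viewed as a subalgebra of $A\times A$, and for a congruence $\beta$, $\Delta_{\alpha\beta}$ is the congruence of $A(\alpha)$ generated by $\{((u,u),(v,v)):(u,v)\in\beta\}$. For a homomorphism $\phi:Q\to\operatorname{Aut}(N)$, $N\rtimes_\phi Q$ is the semidirect product on $N\times Q$ with $(a,x)(b,y)=(a\,\phi(x)(b),xy)$. *)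

(* Defs.v *)
(* Quotient/sub-structures are
   represented as "subquotient algebras": a carrier, a domain predicate (which
   elements belong), an equivalence (when two representatives denote the same
   element) and total operations on the carrier. *)
Set Implicit Arguments.

Section GroupDefs.
Variables (T : Type) (mul : T -> T -> T) (inv : T -> T) (one : T).

Definition is_group : Prop :=
  (forall x y z, mul x (mul y z) = mul (mul x y) z) /\
  (forall x, mul one x = x) /\ (forall x, mul x one = x) /\
  (forall x, mul (inv x) x = one) /\ (forall x, mul x (inv x) = one).

Definition is_subgroup (S : T -> Prop) : Prop :=
  S one /\ (forall x y, S x -> S y -> S (mul x y)) /\ (forall x, S x -> S (inv x)).

Definition is_normal (N : T -> Prop) : Prop :=
  is_subgroup N /\ (forall g x, N x -> N (mul (mul (inv g) x) g)).

Definition commutator (x y : T) : T := mul (mul (mul (inv x) (inv y)) x) y.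

Definition comm_subgroup (K H : T -> Prop) (x : T) : Prop :=
  forall S, is_subgroup S ->
    (forall k h, K k -> H h -> S (commutator k h)) -> S x.

Definition alpha (N : T -> Prop) (x y : T) : Prop := N (mul x (inv y)).

Definition total_rel (x y : T) : Prop := True.

(* congruences of the algebra G(alpha) (subalgebra of G x G, with domain
   given by alpha) *)
Definition pmul (p q : T * T) : T * T := (mul (fst p) (fst q), mul (snd p) (snd q)).
Definition pinv (p : T * T) : T * T := (inv (fst p), inv (snd p)).
Definition pone : T * T := (one, one).

Definition is_congruence_Galpha (al : T -> T -> Prop)
    (R : T * T -> T * T -> Prop) : Prop :=
  (forall p q, R p q -> al (fst p) (snd p) /\ al (fst q) (snd q)) /\
  (forall p, al (fst p) (snd p) -> R p p) /\
  (forall p q, R p q -> R q p) /\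
  (forall p q r, R p q -> R q r -> R p r) /\
  (forall p p' q q', R p p' -> R q q' -> R (pmul p q) (pmul p' q')) /\
  (forall p p', R p p' -> R (pinv p) (pinv p')).

Definition Delta (al be : T -> T -> Prop) (p q : T * T) : Prop :=
  forall R, is_congruence_Galpha al R ->
    (forall u v, be u v -> R (u, u) (v, v)) -> R p q.

End GroupDefs.

Record salg := SAlg {
  sa_car : Type;
  sa_dom : sa_car -> Prop;
  sa_eq : sa_car -> sa_car -> Prop;
  sa_mul : sa_car -> sa_car -> sa_car;
  sa_inv : sa_car -> sa_car;
  sa_one : sa_car }.

Definition is_hom (A B : salg) (f : sa_car A -> sa_car B) : Prop :=
  (forall x, sa_dom A x -> sa_dom B (f x)) /\
  (forall x y, sa_dom A x -> sa_dom A y -> sa_eq A x y -> sa_eq B (f x) (f y)) /\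
  (forall x y, sa_dom A x -> sa_dom A y ->
     sa_eq B (f (sa_mul A x y)) (sa_mul B (f x) (f y))) /\
  (forall x, sa_dom A x -> sa_eq B (f (sa_inv A x)) (sa_inv B (f x))) /\
  sa_eq B (f (sa_one A)) (sa_one B).

Definition is_iso (A B : salg) (f : sa_car A -> sa_car B) : Prop :=
  is_hom A B f /\
  (forall x y, sa_dom A x -> sa_dom A y -> sa_eq B (f x) (f y) -> sa_eq A x y) /\
  (forall b, sa_dom B b -> exists a, sa_dom A a /\ sa_eq B (f a) b).

Definition isomorphic (A B : salg) : Prop := exists f, is_iso A B f.

Definition qgroup (T : Type) (mul : T -> T -> T) (inv : T -> T) (one : T)
    (D N : T -> Prop) : salg :=
  SAlg D (fun x y => D x /\ D y /\ N (mul x (inv y))) mul inv one.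

Definition Galpha_quot (T : Type) (mul : T -> T -> T) (inv : T -> T) (one : T)
    (al : T -> T -> Prop) (theta : T * T -> T * T -> Prop) : salg :=
  SAlg (fun p : T * T => al (fst p) (snd p)) theta
       (pmul mul) (pinv inv) (pone one).

Definition is_aut_action (Q N : salg) (phi : sa_car Q -> sa_car N -> sa_car N)
  : Prop :=
  (forall x, sa_dom Q x -> is_iso N N (phi x)) /\
  (forall x y, sa_dom Q x -> sa_dom Q y -> sa_eq Q x y ->
     forall a, sa_dom N a -> sa_eq N (phi x a) (phi y a)) /\
  (forall x y a, sa_dom Q x -> sa_dom Q y -> sa_dom N a ->
     sa_eq N (phi (sa_mul Q x y) a) (phi x (phi y a))) /\
  (forall a, sa_dom N a -> sa_eq N (phi (sa_one Q) a) a).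

Definition sdprod (N Q : salg) (phi : sa_car Q -> sa_car N -> sa_car N) : salg :=
  SAlg (fun p : sa_car N * sa_car Q => sa_dom N (fst p) /\ sa_dom Q (snd p))
       (fun p q => sa_eq N (fst p) (fst q) /\ sa_eq Q (snd p) (snd q))
       (fun p q => (sa_mul N (fst p) (phi (snd p) (fst q)), sa_mul Q (snd p) (snd q)))
       (fun p => (phi (sa_inv Q (snd p)) (sa_inv N (fst p)), sa_inv Q (snd p)))
       (sa_one N, sa_one Q).

(* Main.v *)
Require Import Defs.
Section S.
Variables (T : Type) (mul : T -> T -> T) (inv : T -> T) (one : T).
Hypothesis HG : is_group mul inv one.
Lemma mA x y z : mul x (mul y z) = mul (mul x y) z. Proof. apply HG. Qed.
Lemma m1l x : mul one x = x. Proof. apply HG. Qed.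
Lemma m1r x : mul x one = x. Proof. apply HG. Qed.
Lemma mVl x : mul (inv x) x = one. Proof. apply HG. Qed.
Lemma mVr x : mul x (inv x) = one. Proof. apply HG. Qed.
Lemma inv_uniq x y : mul x y = one -> y = inv x.
Proof. intro E. rewrite <- (m1l y), <- (mVl x), <- mA, E, m1r. reflexivity. Qed.
Lemma inv_inv x : inv (inv x) = x.
Proof. symmetry. apply inv_uniq. apply mVl. Qed.
Lemma inv_mul x y : inv (mul x y) = mul (inv y) (inv x).
Proof. symmetry. apply inv_uniq. rewrite mA, <- (mA x y), mVr, m1r, mVr. reflexivity. Qed.
Lemma inv_one : inv one = one.
Proof. symmetry. apply inv_uniq. apply m1l. Qed.
Lemma c1 a b : mul (mul a (inv b)) b = a.
Proof. rewrite <- mA, mVl, m1r. reflexivity. Qed.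
Lemma c2 a b : mul (mul a b) (inv b) = a.
Proof. rewrite <- mA, mVr, m1r. reflexivity. Qed.
Ltac gs := repeat first [rewrite mA | rewrite inv_mul | rewrite inv_inv | rewrite inv_one
  | rewrite m1l | rewrite m1r | rewrite c1 | rewrite c2 | rewrite mVl | rewrite mVr].
Ltac geq := gs; reflexivity.
Lemma Nrw {N : T -> Prop} a b : N a -> a = b -> N b.
Proof. intros h e; subst; exact h. Qed.

Definition eqm (N : T -> Prop) x y := N (mul x (inv y)).

Section Norm.
Variable N : T -> Prop.
Hypothesis HN : is_normal mul inv one N.
Lemma n1 : N one. Proof. apply HN. Qed.
Lemma nM x y : N x -> N y -> N (mul x y). Proof. apply HN. Qed.
Lemma nV x : N x -> N (inv x). Proof. apply HN. Qed.
Lemma nC g n : N n -> N (mul (mul g n) (inv g)).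
Proof. intro h. destruct HN as [_ hn]. apply (Nrw _ _ (hn (inv g) n h)). geq. Qed.
Lemma eqm_refl x : eqm N x x. Proof. unfold eqm. rewrite mVr. apply n1. Qed.
Lemma eqm_sym x y : eqm N x y -> eqm N y x.
Proof. unfold eqm; intro h. apply (Nrw _ _ (nV _ h)). geq. Qed.
Lemma eqm_trans x y z : eqm N x y -> eqm N y z -> eqm N x z.
Proof. unfold eqm; intros h1 h2. apply (Nrw _ _ (nM _ _ h1 h2)). geq. Qed.
Lemma eqm_mul x x' y y' : eqm N x x' -> eqm N y y' -> eqm N (mul x y) (mul x' y').
Proof. unfold eqm; intros h1 h2. apply (Nrw _ _ (nM _ _ (nC x _ h2) h1)). geq. Qed.
Lemma eqm_inv x y : eqm N x y -> eqm N (inv x) (inv y).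
Proof. unfold eqm; intros h. apply (Nrw _ _ (nC (inv x) _ (nV _ h))). geq. Qed.
Lemma eqm_rw x y x' y' : eqm N x y -> x = x' -> y = y' -> eqm N x' y'.
Proof. intros h e1 e2; subst; exact h. Qed.
End Norm.
Arguments eqm_rw {N x y} x' y'.

Lemma qeq_of_eq (D N : T -> Prop) u v : is_subgroup mul inv one N -> D u -> u = v ->
  D u /\ D v /\ N (mul u (inv v)).
Proof. intros hN hu e; subst. split; [|split]; auto. rewrite mVr. apply hN. Qed.

Variable K : T -> Prop.
Hypothesis HK : is_normal mul inv one K.

Section Comm.
Variable H : T -> Prop.
Hypothesis HH : is_normal mul inv one H.
Definition C := comm_subgroup mul inv one K H.

Lemma C_sub : is_subgroup mul inv one C.
Proof.
  split; [|split].
  - intros S hS _. apply hS.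
  - intros x y hx hy S hS hc. apply hS; [apply hx|apply hy]; auto.
  - intros x hx S hS hc. apply hS; apply hx; auto.
Qed.

Lemma C_normal : is_normal mul inv one C.
Proof.
  split. apply C_sub.
  intros g x hx. revert g.
  apply (hx (fun x => forall g, C (mul (mul (inv g) x) g))).
  - split; [|split].
    + intro g. apply (Nrw one). apply C_sub. geq.
    + intros a b ha hb g. apply (Nrw _ _ (proj1 (proj2 C_sub) _ _ (ha g) (hb g))). geq.
    + intros a ha g. apply (Nrw _ _ (proj2 (proj2 C_sub) _ (ha g))). geq.
  - intros k h hk hh g S hS hc.
    apply (Nrw _ _ (hc _ _ (proj2 HK g k hk) (proj2 HH g h hh))). unfold commutator. geq.
Qed.

Lemma C_K x : C x -> K x.
Proof.
  intro hx. apply hx. apply HK. intros k h hk hh.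
  unfold commutator. apply (Nrw _ _ (nM _ HK _ _ (nV _ HK _ hk) (proj2 HK h k hk))). geq.
Qed.

Lemma conj1 k h : K k -> H h -> eqm C (mul (mul h k) (inv h)) k.
Proof.
  intros hk hh. unfold eqm.
  assert (hc : C (commutator mul inv (inv k) (inv h))).
  { intros S hS hc. apply hc. apply (nV _ HK _ hk). apply (nV _ HH _ hh). }
  apply (Nrw _ _ (nV _ C_normal _ hc)). unfold commutator. geq.
Qed.

Lemma conj2 k g g' : K k -> H (mul g (inv g')) ->
  eqm C (mul (mul g k) (inv g)) (mul (mul g' k) (inv g')).
Proof.
  intros hk hh.
  apply (eqm_rw _ _ (conj1 _ _ (nC _ HK g' _ hk) hh)); geq.
Qed.

Definition Srel (p q : T * T) : Prop :=
  K (mul (fst p) (inv (snd p))) /\ K (mul (fst q) (inv (snd q))) /\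
  eqm C (mul (fst p) (inv (snd p))) (mul (fst q) (inv (snd q))) /\
  H (mul (snd p) (inv (snd q))).

Lemma alpha_mul x1 y1 x2 y2 : K (mul x1 (inv y1)) -> K (mul x2 (inv y2)) ->
  K (mul (mul x1 x2) (inv (mul y1 y2))).
Proof.
  intros h1 h2. apply (Nrw _ _ (nM _ HK _ _ h1 (nC _ HK y1 _ h2))). geq.
Qed.

Lemma alpha_inv x y : K (mul x (inv y)) -> K (mul (inv x) (inv (inv y))).
Proof.
  intros h. apply (Nrw _ _ (nC _ HK (inv y) _ (nV _ HK _ h))). geq.
Qed.

Lemma core_fwd p q : Delta mul inv (alpha mul inv K) (alpha mul inv H) p q -> Srel p q.
Proof.
  intro hD. apply hD.
  - unfold Srel. split; [|split; [|split; [|split; [|split]]]].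
    + intros a b hab. unfold alpha. tauto.
    + intros [x y] hp. simpl in *. split; [exact hp|split; [exact hp|split]].
      apply eqm_refl, C_normal. rewrite mVr. apply HH.
    + intros a b (h1 & h2 & h3 & h4). split; [exact h2|split; [exact h1|split]].
      apply eqm_sym; [apply C_normal|exact h3].
      apply (eqm_sym _ HH _ _ h4).
    + intros a b c (h1 & h2 & h3 & h4) (h1' & h2' & h3' & h4').
      split; [exact h1|split; [exact h2'|split]].
      apply (eqm_trans _ C_normal _ _ _ h3 h3').
      apply (eqm_trans _ HH _ _ _ h4 h4').
    + intros [x1 y1] [x1' y1'] [x2 y2] [x2' y2'] (h1 & h2 & h3 & h4) (g1 & g2 & g3 & g4).
      unfold pmul; simpl in *.
      split; [apply alpha_mul; assumption|split; [apply alpha_mul; assumption|split]].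
      * assert (e1 : eqm C (mul (mul y1 (mul x2 (inv y2))) (inv y1))
                        (mul (mul y1' (mul x2' (inv y2'))) (inv y1'))).
        { apply (eqm_trans _ C_normal _ _ _ (conj2 _ _ _ g1 h4)).
          apply eqm_mul. apply C_normal. apply eqm_mul. apply C_normal.
          apply eqm_refl, C_normal. exact g3. apply eqm_refl, C_normal. }
        apply (eqm_rw _ _ (eqm_mul _ C_normal _ _ _ _ h3 e1)); geq.
      * apply (eqm_mul _ HH _ _ _ _ h4 g4).
    + intros [x y] [x' y'] (h1 & h2 & h3 & h4). unfold pinv; simpl in *.
      split; [apply alpha_inv; assumption|split; [apply alpha_inv; assumption|split]].
      * assert (e1 := conj2 _ (inv y) (inv y') (nV _ HK _ h1) (eqm_inv _ HH _ _ h4)).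
        refine (eqm_rw _ _ (eqm_trans _ C_normal _ _ _ e1 _) _ _).
        apply eqm_mul. apply C_normal. apply eqm_mul. apply C_normal.
        apply eqm_refl, C_normal. apply eqm_inv. apply C_normal. exact h3.
        apply eqm_refl, C_normal. geq. geq.
      * apply (eqm_inv _ HH _ _ h4).
  - intros u v huv. unfold Srel; simpl. rewrite !mVr.
    split; [apply HK|split; [apply HK|split]]. apply eqm_refl, C_normal. exact huv.
Qed.

Lemma core_bwd p q : Srel p q -> Delta mul inv (alpha mul inv K) (alpha mul inv H) p q.
Proof.
  destruct p as [x1 y1], q as [x2 y2]. intros (h1 & h2 & h3 & h4). simpl in *.
  intros R [R1 [R2 [R3 [R4 [R5 R6]]]]] Hgen.
  assert (Rrw : forall p q p' q', R p q -> p = p' -> q = q' -> R p' q').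
  { intros ? ? ? ? r e1 e2; subst; exact r. }
  assert (Rk : forall k, K k -> R (k, one) (k, one)).
  { intros k hk. apply R2. unfold alpha; simpl. rewrite inv_one, m1r. exact hk. }
  assert (Rh : forall h, H h -> R (h, h) (one, one)).
  { intros h hh. apply Hgen. unfold alpha. rewrite inv_one, m1r. exact hh. }
  assert (Hc : forall c, C c -> R (c, one) (one, one)).
  { intros c hc. apply hc.
    - split; [|split].
      + apply R2. unfold alpha; simpl. rewrite mVr. apply HK.
      + intros a b ha hb. apply (Rrw _ _ _ _ (R5 _ _ _ _ ha hb)); unfold pmul; simpl; f_equal; geq.
      + intros a ha. apply (Rrw _ _ _ _ (R6 _ _ ha)); unfold pinv; simpl; f_equal; geq.
    - intros k h hk hh.
      assert (r := R5 _ _ _ _ (R5 _ _ _ _ (R5 _ _ _ _ (Rk _ (nV _ HK _ hk)) (Rh _ (nV _ HH _ hh)))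
                    (Rk _ hk)) (Rh _ hh)).
      apply (Rrw _ _ _ _ r); unfold pmul, commutator; simpl; f_equal; geq. }
  assert (r1 := Hc _ h3).
  assert (r2 := R5 _ _ _ _ r1 (Rk _ h2)).
  assert (r3 := R5 _ _ _ _ r2 (Hgen y1 y2 h4)).
  apply (Rrw _ _ _ _ r3); unfold pmul; simpl; f_equal; geq.
Qed.
End Comm.

Definition phi (g k : T) := mul (mul g k) (inv g).

Lemma part1 (H : T -> Prop) (HH : is_normal mul inv one H) (KH : forall x, K x -> H x) :
  (exists phi : T -> T -> T,
     is_aut_action (qgroup mul inv one (fun _ => True) H)
                   (qgroup mul inv one K (comm_subgroup mul inv one K H)) phi /\
     isomorphic
       (Galpha_quot mul inv one (alpha mul inv K)
          (Delta mul inv (alpha mul inv K) (alpha mul inv H)))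
       (sdprod (qgroup mul inv one K (comm_subgroup mul inv one K H))
               (qgroup mul inv one (fun _ => True) H) phi)).
Proof.
  assert (CN := C_normal H HH). assert (CS := C_sub H).
  exists phi. split.
  - unfold is_aut_action, phi; simpl. split; [|split; [|split]].
    + intros x _. unfold is_iso, is_hom; simpl.
      split; [split; [|split; [|split; [|split]]]|split].
      * intros a ha. apply (nC _ HK _ _ ha).
      * intros a b ha hb (_ & _ & hab). split; [apply (nC _ HK _ _ ha)|split; [apply (nC _ HK _ _ hb)|]].
        apply (Nrw _ _ (nC _ CN x _ hab)). geq.
      * intros a b ha hb. apply qeq_of_eq; auto. apply (nC _ HK _ _ (nM _ HK _ _ ha hb)). geq.
      * intros a ha. apply qeq_of_eq; auto. apply (nC _ HK _ _ (nV _ HK _ ha)). geq.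
      * apply qeq_of_eq; auto. apply (nC _ HK _ _ (n1 _ HK)). geq.
      * intros a b ha hb (_ & _ & hab). split; [exact ha|split; [exact hb|]].
        apply (Nrw _ _ (nC _ CN (inv x) _ hab)). geq.
      * intros b hb. exists (mul (mul (inv x) b) (inv (inv x))). split.
        apply (nC _ HK _ _ hb). apply qeq_of_eq; auto.
        apply (nC _ HK _ _ (nC _ HK _ _ hb)). geq.
    + intros x y _ _ (_ & _ & hxy) a ha. split; [apply (nC _ HK _ _ ha)|split; [apply (nC _ HK _ _ ha)|]].
      apply (conj2 H HH _ _ _ ha hxy).
    + intros x y a _ _ ha. apply qeq_of_eq; auto. apply (nC _ HK _ _ ha). geq.
    + intros a ha. apply qeq_of_eq; auto. apply (nC _ HK _ _ ha). geq.
  - exists (fun p : T * T => (mul (fst p) (inv (snd p)), snd p)).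
    assert (HS : is_subgroup mul inv one H) by apply HH.
    unfold is_iso, is_hom, phi; simpl.
    split; [split; [|split; [|split; [|split]]]|split].
    + intros [x y] h; simpl in *. split; auto.
    + intros [x1 y1] [x2 y2] _ _ hD. destruct (core_fwd H HH _ _ hD) as (h1 & h2 & h3 & h4).
      simpl in *. split; split; auto.
    + intros [x1 y1] [x2 y2] h1 h2. unfold pmul; simpl in *. split.
      apply qeq_of_eq; auto. apply (alpha_mul _ _ _ _ h1 h2). geq.
      apply (qeq_of_eq (fun _ => True)); auto.
    + intros [x y] h. unfold pinv; simpl in *. split.
      apply qeq_of_eq; auto. apply (alpha_inv _ _ h). geq.
      apply (qeq_of_eq (fun _ => True)); auto.
    + unfold pone; simpl. split. apply qeq_of_eq; auto. apply (Nrw one). apply HK. geq. geq.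
      apply (qeq_of_eq (fun _ => True)); auto.
    + intros [x1 y1] [x2 y2] h1 h2 [(_ & _ & e1) (_ & _ & e2)]. apply core_bwd; auto.
      unfold Srel; simpl. auto.
    + intros [a y] [ha _]; simpl in *. exists (mul a y, y). simpl. split.
      unfold alpha; simpl. apply (Nrw a). exact ha. geq.
      split.
      { apply (qeq_of_eq K (C H)); [exact CS| |geq]. apply (Nrw a); [exact ha|geq]. }
      { apply (qeq_of_eq (fun _ => True) H); auto. }
Qed.

Lemma part2 :
  isomorphic
    (Galpha_quot mul inv one (alpha mul inv K)
       (Delta mul inv (alpha mul inv K) (@total_rel T)))
    (qgroup mul inv one K (comm_subgroup mul inv one K (fun _ => True))).
Proof.
  assert (HT : is_normal mul inv one (fun _ : T => True)).
  { split; [split; [|split]|]; auto. }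
  assert (CN := C_normal _ HT). assert (CS := C_sub (fun _ => True)).
  exists (fun p : T * T => mul (fst p) (inv (snd p))).
  unfold is_iso, is_hom; simpl.
  split; [split; [|split; [|split; [|split]]]|split].
  - intros [x y] h; exact h.
  - intros [x1 y1] [x2 y2] _ _ hD. destruct (core_fwd _ HT _ _ hD) as (h1 & h2 & h3 & h4).
    simpl in *. auto.
  - intros [x1 y1] [x2 y2] h1 h2. unfold pmul; simpl in *.
    split; [apply (alpha_mul _ _ _ _ h1 h2)|split; [apply (nM _ HK _ _ h1 h2)|]].
    assert (e := eqm_mul _ CN _ _ _ _ (eqm_refl _ CN (mul x1 (inv y1)))
                    (conj1 _ HT _ y1 h2 I)).
    apply (eqm_rw _ _ e); geq.
  - intros [x y] h. unfold pinv; simpl in *.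
    split; [apply (alpha_inv _ _ h)|split; [apply (nV _ HK _ h)|]].
    assert (e := conj1 _ HT _ (inv y) (nV _ HK _ h) I).
    apply (eqm_rw _ _ e); geq.
  - unfold pone; simpl. apply qeq_of_eq; auto. apply (Nrw one). apply HK. geq. geq.
  - intros [x1 y1] [x2 y2] h1 h2 (_ & _ & e). apply (core_bwd (fun _ => True) HT); auto.
    unfold Srel; simpl. auto.
  - intros b hb. exists (b, one). simpl. split.
    unfold alpha; simpl. apply (Nrw b). exact hb. geq.
    apply (qeq_of_eq K (C (fun _ => True))); [exact CS| |geq]. apply (Nrw b); [exact hb|geq].
Qed.
End S.

Theorem lemma2p9 (T : Type) (mul : T -> T -> T) (inv : T -> T) (one : T)
  (HG : is_group mul inv one) (K H : T -> Prop)
  (HK : is_normal mul inv one K) (HH : is_normal mul inv one H)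
  (KH : forall x, K x -> H x) :
  (exists phi : T -> T -> T,
     is_aut_action (qgroup mul inv one (fun _ => True) H)
                   (qgroup mul inv one K (comm_subgroup mul inv one K H)) phi /\
     isomorphic
       (Galpha_quot mul inv one (alpha mul inv K)
          (Delta mul inv (alpha mul inv K) (alpha mul inv H)))
       (sdprod (qgroup mul inv one K (comm_subgroup mul inv one K H))
               (qgroup mul inv one (fun _ => True) H) phi)) /\
  isomorphic
    (Galpha_quot mul inv one (alpha mul inv K)
       (Delta mul inv (alpha mul inv K) (@total_rel T)))
    (qgroup mul inv one K (comm_subgroup mul inv one K (fun _ => True))).
Proof.
  split. apply (part1 _ _ _ _ HG _ HK H HH KH). apply (part2 _ _ _ _ HG _ HK).
Qed.
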